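(* Consider the augmented Lagrange algorithm described in the context (with arbitrary choices of solutions in step (1)), and assume that only finitely many of its steps are successful. Then $\limsup_{k\to\infty}(\bar\mu_k,\psi-\bar y_k)_+\le0$.
   Context: Setting. Let $\Omega\subset\mathbb{R}^N$, $N\in\{2,3\}$, be a bounded domain with $C^{1,1}$ boundary $\Gamma$, or a bounded convex domain with polygonal boundary $\Gamma$. Let $y_d\in L^2(\Omega)$, $\psi\in C(\bar\Omega)$, $\alpha>0$, $u_a,u_b\in L^\infty(\Omega)$ with $u_a\le u_b$, $U_{ad}=\{u\in L^\infty(\Omega): u_a\le u\le u_b\text{ a.e.}\}$. Let $Ay=-\sum_{i,j=1}^N\partial_{x_j}(a_{ij}\partial_{x_i}y)+a_0y$ with $a_{ij}\in C^{0,1}(\bar\Omega)$, $a_0\in L^\infty(\Omega)$, $a_0\ge0$ a.e., $a_0\not\equiv0$, uniformly elliptic with constant $\delta>0$; $\partial_{\nu_A}y=\sum a_{ij}\partial_{x_i}y\,\nu_j$; $A^*$ the formal adjoint with conormal derivative $\partial_{\nu_{A^*}}$. The function $d:\Omega\times\mathbb{R}\to\mathbb{R}$ is measurable in $x$, $C^2$ in $y$ for a.e. $x$, $\|d(\cdot,0)\|_\infty+\|d_y(\cdot,0)\|_\infty+\|d_{yy}(\cdot,0)\|_\infty<\infty$, $d_y\ge0$, $d_{yy}$ Lipschitz in $y$ on bounded sets uniformly in $x$, and $d_y>0$ on $E_\Omega\times\mathbb{R}$ for some $E_\Omega$ of positive measure. $S(u)\in H^1(\Omega)\cap C(\bar\Omega)$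 is the weak solution of $Ay+d(x,y)=u$ in $\Omega$, $\partial_{\nu_A}y=0$ on $\Gamma$. $(\cdot)_+=\max(0,\cdot)$ pointwise; $(a,b)_+:=\int_\Omega\max(0,a(x)b(x))dx$. Optimality system of the augmented Lagrange sub-problem ($\rho>0$, $0\le\mu\in L^2$): $(\bar y,\bar u,\bar p)$ with $\bar u\in U_{ad}$, $\bar y=S(\bar u)$, $\bar p\in H^1(\Omega)$ weak solution of $A^*\bar p+d_y(x,\bar y)\bar p=\bar y-y_d+(\mu+\rho(\bar y-\psi))_+$, $\partial_{\nu_{A^*}}\bar p=0$, and $(\bar p+\alpha\bar u,u-\bar u)\ge0$ for all $u\in U_{ad}$. Algorithm: choose $\rho_1>0$, $0\le\mu_1\in L^2(\Omega)$, $\theta>1$, $\tau\in(0,1)$, $R_0^+>0$; $k=n=1$. Iteration $k$: (1) choose a solution $(\bar y_k,\bar u_k,\bar p_k)$ of the optimality system with $\mu=\mu_k,\rho=\rho_k$; (2) $\bar\mu_k:=(\mu_k+\rho_k(\bar y_k-\psi))_+$; (3) $R_k:=\|(\bar y_k-\psi)_+\|_{C(\bar\Omega)}+(\bar\mu_k,\psi-\bar y_k)_+$; (4) if $R_k\le\tau R^+_{n-1}$ the step is successful: $\mu_{k+1}:=\bar\mu_k$, $\rho_{k+1}:=\rho_k$, $R_n^+:=R_k$, $n:=n+1$; (5) otherwise $\mu_{k+1}:=\mu_k$, $\rho_{k+1}:=\theta\rho_k$; then $k:=k+1$ and repeat indefinitely. *)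

(* Defs.v *)
From HB Require Import structures.
From mathcomp Require Import all_boot all_order all_algebra.
From mathcomp Require Import all_classical all_reals all_analysis.
Set Implicit Arguments. Unset Strict Implicit. Unset Printing Implicit Defensive.
Import Order.TTheory GRing.Theory Num.Theory.
Local Open Scope classical_set_scope.
Local Open Scope ring_scope.

Definition ppair {d} {T : measurableType d} {R : realType}
  (mu : {measure set T -> \bar R}) (Om : set T) (a b : T -> R) : \bar R :=
  (\int[mu]_(x in Om) (Num.max 0 (a x * b x))%:E)%E.

(* || f_+ ||_{C(closure Omega)} computed as the sup over Omega of max(0, f) *)
Definition supnorm_pos {T : Type} {R : realType} (Om : set T) (f : T -> R)
  : \bar R := ereal_sup [set (Num.max 0 (f x))%:E | x in Om].

Definition mubar_of {T : Type} {R : realType} (muk : T -> R) (rhok : R)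
  (yk psi : T -> R) : T -> R :=
  fun x => Num.max 0 (muk x + rhok * (yk x - psi x)).

Definition Rk_of {d} {T : measurableType d} {R : realType}
  (mu : {measure set T -> \bar R}) (Om : set T) (muk : T -> R) (rhok : R)
  (yk psi : T -> R) : \bar R :=
  (supnorm_pos Om (fun x => (yk x - psi x)%R)
   + ppair mu Om (mubar_of muk rhok yk psi) (fun x => (psi x - yk x)%R))%E.

(* A run of the augmented Lagrange algorithm (iterations indexed from 0
   instead of 1).  [mu_ k], [rho k] are mu_{k+1}, rho_{k+1} of the paper;
   [ybar k], [ubar k], [pbar k] the solution chosen in step (1);
   [cnt k] is the value of the counter n at the start of iteration k;
   [Rp j] is R_j^+ (Rp 0 = R_0^+).  [OptSys m r y u p] stands for
   "(y,u,p) solves the optimality system with mu = m, rho = r". *)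
Definition AL_run {d} {T : measurableType d} {R : realType}
  (mu : {measure set T -> \bar R}) (Om : set T) (psi : T -> R)
  (OptSys : (T -> R) -> R -> (T -> R) -> (T -> R) -> (T -> R) -> Prop)
  (rho1 : R) (mu1 : T -> R) (theta tau : R) (R0 : R)
  (mu_ : nat -> T -> R) (rho : nat -> R)
  (ybar ubar pbar : nat -> T -> R) (Rp : nat -> \bar R) (cnt : nat -> nat)
  : Prop :=
  [/\ [/\ mu_ 0 = mu1, rho 0 = rho1, Rp 0 = R0%:E & cnt 0 = 1%N],
      (forall k, OptSys (mu_ k) (rho k) (ybar k) (ubar k) (pbar k)) &
      forall k,
        let Rk := Rk_of mu Om (mu_ k) (rho k) (ybar k) psi in
        if asbool (Rk <= tau%:E * Rp (cnt k).-1)%E then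
          [/\ mu_ k.+1 = mubar_of (mu_ k) (rho k) (ybar k) psi,
              rho k.+1 = rho k, Rp (cnt k) = Rk & cnt k.+1 = (cnt k).+1]
        else
          [/\ mu_ k.+1 = mu_ k, rho k.+1 = (theta * rho k)%R & cnt k.+1 = cnt k]].

Definition AL_successful {d} {T : measurableType d} {R : realType}
  (mu : {measure set T -> \bar R}) (Om : set T) (psi : T -> R) (tau : R)
  (mu_ : nat -> T -> R) (rho : nat -> R) (ybar : nat -> T -> R)
  (Rp : nat -> \bar R) (cnt : nat -> nat) (k : nat) : Prop :=
  (Rk_of mu Om (mu_ k) (rho k) (ybar k) psi <= tau%:E * Rp (cnt k).-1)%E.

(* Main.v *)
Require Import Defs.
From HB Require Import structures.
From mathcomp Require Import all_boot all_order all_algebra.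
From mathcomp Require Import all_classical all_reals all_analysis.
From mathcomp Require Import lra measurable_realfun.
Import Order.TTheory GRing.Theory Num.Theory.
Local Open Scope classical_set_scope.
Local Open Scope ring_scope.

Lemma mubar_meas d (T : measurableType d) (R : realType) (Om : set T) (m y p : T -> R) r :
  measurable Om -> measurable_fun Om m -> measurable_fun Om y -> measurable_fun Om p ->
  measurable_fun Om (mubar_of m r y p).
Proof.
move=> mOm mm my mp; rewrite /mubar_of.
apply: (@measurable_maxr _ _ _ _ (cst 0) (fun x => m x + r * (y x - p x))); first exact: measurable_cst.
apply: measurable_funD => //; apply: (@measurable_funM _ _ _ _ (cst r) (fun x => y x - p x)); first exact: measurable_cst.
exact: measurable_funB.
Qed.
Lemma maxE' (R : realType) (a b : R) : Num.max a b = if a < b then b else a.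
Proof. by []. Qed.

Lemma pw_bound (R : realType) (m r y p : R) : 0 < r ->
  Num.max 0 (Num.max 0 (m + r * (y - p)) * (p - y)) <= m ^+ 2 / r.
Proof.
move=> r0; rewrite ler_pdivlMr //.
rewrite [Num.max 0 (m + _)]maxE'; case: ifPn => h1; rewrite maxE'; case: ifPn => h2; move: h1 h2; rewrite -?real_ltNge ?num_real // => h1 h2.
  have := sqr_ge0 (m - 2 * r * (p - y)); have := sqr_ge0 (r * (p - y)); nra.
all: by rewrite ?mul0r ?sqr_ge0.
Qed.

Lemma sq_bound (R : realType) (m r y p My Mp : R) : 0 <= r ->
  `|y| <= My -> `|p| <= Mp ->
  (Num.max 0 (m + r * (y - p))) ^+ 2 <= 2 * m ^+ 2 + 2 * (r * (My + Mp)) ^+ 2.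
Proof.
move=> r0 /ler_normlP [y1 y2] /ler_normlP [p1 p2].
have h1 : (y - p) ^+ 2 <= (My + Mp) ^+ 2 by nra.
have h3 : (r * (y - p)) ^+ 2 <= (r * (My + Mp)) ^+ 2 by rewrite !exprMn; nra.
rewrite maxE'; case: ifPn => h; move: h; rewrite -?real_ltNge ?num_real // => h.
  have := sqr_ge0 (m - r * (y - p)); nra.
have := sqr_ge0 m; have := sqr_ge0 (r * (My + Mp)); rewrite expr0n /=; lra.
Qed.

Lemma fin_nat (A : set nat) : finite_set A -> exists K, forall k, (K <= k)%N -> ~ A k.
Proof.
move=> /finite_fsetP [X ->]; exists (\max_(i <- finmap.enum_fset X) i).+1 => k Kk /= kX.
have : (k <= \max_(i <- finmap.enum_fset X) i)%N by apply: leq_bigmax_seq.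
by rewrite leqNgt Kk.
Qed.

Lemma ppair_bound d (T : measurableType d) (R : realType) (mu : {measure set T -> \bar R})
  (Om : set T) (m y p : T -> R) r :
  measurable Om -> measurable_fun Om m -> measurable_fun Om y -> measurable_fun Om p ->
  0 < r ->
  (ppair mu Om (mubar_of m r y p) (fun x => (p x - y x)%R) <=
   (r^-1)%:E * \int[mu]_(x in Om) (m x ^+ 2)%R%:E)%E.
Proof.
move=> mOm mm my mp r0; rewrite /ppair -ge0_integralZl_EFin //; last 3 first.
- by move=> x _; rewrite lee_fin sqr_ge0.
- by apply/measurable_EFinP; exact: measurable_funX.
- by rewrite invr_ge0 ltW.
apply: ge0_le_integral => //.
- by move=> x _; rewrite lee_fin le_max lexx.
- apply/measurable_EFinP.
  apply: (@measurable_maxr _ _ _ _ (cst 0) (fun x => mubar_of m r y p x * (p x - y x))); first exact: measurable_cst.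
  apply: measurable_funM; first exact: mubar_meas.
  exact: measurable_funB.
- apply/measurable_EFinP; apply: (@measurable_funM _ _ _ _ (cst r^-1) (fun x => m x ^+ 2)); first exact: measurable_cst.
  exact: measurable_funX.
move=> x _; rewrite -EFinM lee_fin [r^-1 * _]mulrC; exact: pw_bound.
Qed.

Lemma sq_step d (T : measurableType d) (R : realType) (mu : {measure set T -> \bar R})
  (Om : set T) (m y p : T -> R) r My Mp :
  measurable Om -> (mu Om < +oo)%E -> measurable_fun Om m -> measurable_fun Om y -> measurable_fun Om p ->
  0 <= r -> (forall x, Om x -> `|y x| <= My) -> (forall x, Om x -> `|p x| <= Mp) ->
  (\int[mu]_(x in Om) (m x ^+ 2)%R%:E < +oo)%E ->
  (\int[mu]_(x in Om) (mubar_of m r y p x ^+ 2)%R%:E < +oo)%E.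
Proof.
move=> mOm muOm mm my mp r0 hy hp hm.
set c := 2 * (r * (My + Mp)) ^+ 2.
have c0 : 0 <= c by rewrite mulr_ge0 ?sqr_ge0.
apply: (@le_lt_trans _ _ (\int[mu]_(x in Om) ((2 * m x ^+ 2)%R%:E + c%:E))%E).
  apply: ge0_le_integral => //.
  - by move=> x _; rewrite lee_fin sqr_ge0.
  - by apply/measurable_EFinP; apply: measurable_funX; exact: mubar_meas.
  - apply/measurable_EFinP; apply: measurable_funD; last exact: measurable_cst.
    apply: (@measurable_funM _ _ _ _ (cst 2) (fun x => m x ^+ 2)); first exact: measurable_cst.
    exact: measurable_funX.
  by move=> x Ox; rewrite -EFinD lee_fin; exact: sq_bound (hy x Ox) (hp x Ox).
rewrite ge0_integralD //; last 2 first.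
- by move=> x _; rewrite lee_fin mulr_ge0 ?sqr_ge0.
- apply/measurable_EFinP; apply: (@measurable_funM _ _ _ _ (cst 2) (fun x => m x ^+ 2)); first exact: measurable_cst.
  exact: measurable_funX.
apply: lte_add_pinfty.
  under eq_integral do rewrite EFinM.
  rewrite ge0_integralZl_EFin //.
  - by rewrite lte_mul_pinfty.
  - by move=> x _; rewrite lee_fin sqr_ge0.
  - by apply/measurable_EFinP; exact: measurable_funX.
have -> := integral_cst mu mOm c%:E.
by rewrite lte_mul_pinfty.
Qed.

Lemma bern (R : realType) (t : R) (j : nat) : 1 < t -> 1 + j%:R * (t - 1) <= t ^+ j.
Proof.
move=> t1; elim: j => [|j IH]; first by rewrite mul0r addr0 expr0.
rewrite exprS -natr1.
have h := ler_wpM2l (ltW (lt_trans ltr01 t1)) IH.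
have := ler0n R j; have := sqr_ge0 (t - 1); nra.
Qed.

Theorem lemma4p2 (d : measure_display) (T : measurableType d) (R : realType)
  (mu : {measure set T -> \bar R}) (Om : set T) (psi : T -> R)
  (OptSys : (T -> R) -> R -> (T -> R) -> (T -> R) -> (T -> R) -> Prop)
  (rho1 : R) (mu1 : T -> R) (theta tau R0 : R)
  (mu_ : nat -> T -> R) (rho : nat -> R)
  (ybar ubar pbar : nat -> T -> R) (Rp : nat -> \bar R) (cnt : nat -> nat) :
  measurable Om -> Om !=set0 -> (mu Om < +oo)%E ->
  measurable_fun Om psi -> (exists M : R, forall x, Om x -> `|psi x| <= M) ->
  (forall k, measurable_fun Om (ybar k)) ->
  (forall k, exists M : R, forall x, Om x -> `|ybar k x| <= M) ->
  0 < rho1 ->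
  (forall x, Om x -> 0 <= mu1 x) -> measurable_fun Om mu1 ->
  (\int[mu]_(x in Om) ((mu1 x) ^+ 2)%:E < +oo)%E ->
  1 < theta -> 0 < tau < 1 -> 0 < R0 ->
  AL_run mu Om psi OptSys rho1 mu1 theta tau R0 mu_ rho ybar ubar pbar Rp cnt ->
  finite_set [set k | AL_successful mu Om psi tau mu_ rho ybar Rp cnt k] ->
  (limn_esup (fun k => ppair mu Om (mubar_of (mu_ k) (rho k) (ybar k) psi)
                          (fun x => (psi x - ybar k x)%R)) <= 0)%E.
Proof.
move=> mOm Om0 muOm mpsi [Mp hp] mybar hybar rho1_0 mu1_0 mmu1 imu1 th1 /andP[tau0 tau1] R00.
move=> [[h0mu h0rho _ _] _ hstep] hfin.
set S := AL_successful mu Om psi tau mu_ rho ybar Rp cnt.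
have step k : (S k /\ mu_ k.+1 = mubar_of (mu_ k) (rho k) (ybar k) psi /\ rho k.+1 = rho k) \/
              (~ S k /\ mu_ k.+1 = mu_ k /\ rho k.+1 = theta * rho k).
  move: (hstep k) => /=; rewrite /S /AL_successful.
  by case: asboolP => h [] *; [left|right].
have rpos k : 0 < rho k.
  elim: k => [|k IH]; first by rewrite h0rho.
  case: (step k) => [[_ [_ ->]]|[_ [_ ->]]] //.
  by rewrite mulr_gt0 // (lt_trans ltr01 th1).
have mint k : measurable_fun Om (mu_ k) /\ (\int[mu]_(x in Om) ((mu_ k x) ^+ 2)%:E < +oo)%E.
  elim: k => [|k [IHm IHi]]; first by rewrite h0mu.
  case: (step k) => [[_ [-> _]]|[_ [-> _]]]; last by split.
  have [My hy] := hybar k.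
  split; first exact: mubar_meas.
  exact: (@sq_step _ _ _ mu Om _ _ _ _ _ _ mOm muOm IHm (mybar k) mpsi (ltW (rpos k)) hy hp IHi).
have [K hK] := @fin_nat _ hfin.
have after j : mu_ (K + j)%N = mu_ K /\ rho (K + j)%N = theta ^+ j * rho K.
  elim: j => [|j [IHm IHr]]; first by rewrite addn0 expr0 mul1r.
  case: (step (K + j)%N) => [[hs _]|[_ [hm hr]]].
    by exfalso; apply: (hK (K + j)%N) => //; rewrite leq_addr.
  by rewrite addnS hm hr IHm IHr exprS mulrA.
have [mK iK] := mint K.
set I := (\int[mu]_(x in Om) ((mu_ K x) ^+ 2)%:E)%E in iK.
have I0 : (0 <= I)%E by apply: integral_ge0 => x _; rewrite lee_fin sqr_ge0.
have Ic : I = (fine I)%:E by rewrite fineK // ge0_fin_numE.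
set c := fine I in Ic.
have c0 : 0 <= c by rewrite /c fine_ge0.
have rK := rpos K.
have bnd j : (ppair mu Om (mubar_of (mu_ (K + j)%N) (rho (K + j)%N) (ybar (K + j)%N) psi)
      (fun x => (psi x - ybar (K + j)%N x)%R) <= (c / (theta ^+ j * rho K))%:E)%E.
  have [hm hr] := after j.
  rewrite hm -hr.
  apply: le_trans (@ppair_bound _ _ _ mu Om _ _ _ _ mOm mK (mybar _) mpsi (rpos _)) _.
  by rewrite -/I Ic -EFinM mulrC.
apply/lee_addgt0Pr => e e0; rewrite add0e.
have tm1 : 0 < theta - 1 by rewrite subr_gt0.
set q := c / (e * rho K * (theta - 1)).
set j0 := (Num.truncn q).+1.
have hq : q < j0%:R by exact: Num.Theory.truncnS_gt.
rewrite /limn_esup /limf_esup.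
apply: le_trans; first apply: ereal_inf_lbound.
  exists [set k | (K + j0 <= k)%N] => //=; exists (K + j0)%N => //.
apply: ge_ereal_sup => _ [k /= Nk <-].
have Kk : (K <= k)%N by apply: leq_trans Nk; rewrite leq_addr.
rewrite -(subnKC Kk).
apply: le_trans (bnd _) _.
have jj : (j0 <= k - K)%N by rewrite leq_subRL.
have thp : 0 < theta ^+ (k - K)%N by rewrite exprn_gt0 // (lt_trans ltr01 th1).
rewrite lee_fin ler_pdivrMr ?mulr_gt0 //.
have hb := @bern _ theta (k - K)%N th1.
have hj : j0%:R <= (k - K)%N%:R :> R by rewrite ler_nat.
have hq2 : c < j0%:R * (e * rho K * (theta - 1)).
  by rewrite -ltr_pdivrMr ?mulr_gt0.
have : j0%:R * (e * rho K * (theta - 1)) <= (k - K)%N%:R * (e * rho K * (theta - 1)).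
  by rewrite ler_wpM2r // ltW // !mulr_gt0.
have : e * rho K * (1 + (k - K)%N%:R * (theta - 1)) <= e * rho K * theta ^+ (k - K)%N.
  by rewrite ler_wpM2l // ltW // mulr_gt0.
have := mulr_gt0 e0 rK.
nra.
Qed.
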